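(* Local dominance improvement dynamics for multiple issues need not converge, even if all issues are binary and all agents use the $\ell_\infty$ distance with the same constant uncertainty parameters. One instance: - $p=2$ binary issues, $n=13$ agents, and $(r^1_j,r^2_j)=(1,2)$ for every agent $j$ in every round. - Three agents have ranking $(0,1)\succ(1,1)\succ(1,0)\succ(0,0)$. - Five agents have ranking $(0,0)\succ(0,1)\succ(1,1)\succ(1,0)$. - Four agents have ranking $(1,0)\succ(1,1)\succ(0,0)\succ(0,1)$. - One agent has ranking $(1,1)\succ(1,0)\succ(0,1)\succ(0,0)$. In this instance there is an infinite (cyclic) sequence of LDI steps starting from the truthful vote profile.
   Context: Issues $\mathcal P=\{1,\dots,p\}$ with finite candidate sets $D_i$; binary means $D_i=\{0,1\}$. There are $n$ agents with strict rankings $\succ_j$ over $\mathcal D=\prod_iD_i$, and vote profiles $a\in\mathcal D^n$. The truthful profile has each agent voting for their top alternative. Score tuples and outcomes: - For a score tuple $v=(v^i)_i$ with $v^i\in\mathbb N^{D_i}$, the plurality outcome $f(v)$ picks on each issue the top-scoring candidate, with ties broken lexicographically ($0$ before $1$). - $v+b$ adds one vote for $b^i$ on each issue $i$. - $s_{-j}(a)$ is the score tuple of $a$ without agent $j$. Uncertainty with the $\ell_\infty$ distance and parameters $r_j=(r_j^i)_i$: $$\tilde S_{-j}(a;r_j)=\prod_i\{v^i\in\mathbb N^{D_i}:\max_{c}|v^i(c)-s^i_{-j}(c;a)|\le r^i_j\}.$$ Local dominance: $\hat a_j$ $S$-beats $a_j$ if some $v\in S$ has $f(v+\hat a_j)\succ_j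 f(v+a_j)$. The vote $\hat a_j$ $S$-dominates $a_j$ if it $S$-beats $a_j$ and $a_j$ does not $S$-beat $\hat a_j$. An LDI step of $j$ on issue $i$ at $a$ (with $S=\tilde S_{-j}(a;r_j)$) is a change to a vote that satisfies all of the following: - it $S$-dominates $a_j$; - it differs from $a_j$ only on issue $i$; - it is not $S$-dominated by another vote differing from $a_j$ only on issue $i$. Dynamics: at each round a scheduler selects one agent and one issue on which the agent has an LDI step, and that agent makes it. Convergence means every such sequence is finite from every initial profile. *)

(* Defs.v *)
From mathcomp Require Import all_boot.
Set Implicit Arguments. Unset Strict Implicit. Unset Printing Implicit Defensive.

(* Alternatives in D = {0,1}^p; candidate 0 = false, 1 = true. *)
Definition alt (p : nat) := {ffun 'I_p -> bool}.

(* A strict ranking is given as a duplicate-free list of all alternatives,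
   best first; x is preferred to y iff x occurs earlier. *)
Definition ranking (p : nat) := seq (alt p).
Definition is_ranking p (r : ranking p) := uniq r /\ forall x : alt p, x \in r.
Definition prefers p (r : ranking p) (x y : alt p) : bool :=
  index x r < index y r.
Definition top p (r : ranking p) (dflt : alt p) : alt p := head dflt r.

Definition profile (p n : nat) := 'I_n -> alt p.

(* Score tuples: v i c = score of candidate c on issue i. *)
Definition score (p : nat) := 'I_p -> bool -> nat.

(* Plurality outcome, ties broken lexicographically (0 = false before 1). *)
Definition outcome p (v : score p) : alt p := [ffun i => v i false < v i true].

Definition addv p (v : score p) (b : alt p) : score p :=
  fun i c => v i c + (b i == c).

Definition s_minus p n (a : profile p n) (j : 'I_n) : score p :=
  fun i c => #|[pred k : 'I_n | (k != j) && (a k i == c)]|.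

Definition Sinf p n (a : profile p n) (j : 'I_n) (rj : 'I_p -> nat)
  (v : score p) : Prop :=
  forall i c, v i c <= s_minus a j i c + rj i /\ s_minus a j i c <= v i c + rj i.

Definition Sbeats p (r : ranking p) (S : score p -> Prop) (b b' : alt p) : Prop :=
  exists v, S v /\ prefers r (outcome (addv v b)) (outcome (addv v b')).
Definition Sdominates p (r : ranking p) (S : score p -> Prop) (b b' : alt p) : Prop :=
  Sbeats r S b b' /\ ~ Sbeats r S b' b.

Definition differs_only_on p (i : 'I_p) (b b' : alt p) : Prop :=
  forall k, k != i -> b k = b' k.

Definition ldi_step p n (rk : 'I_n -> ranking p) (r : 'I_n -> 'I_p -> nat)
  (a : profile p n) (j : 'I_n) (i : 'I_p) (a' : profile p n) : Prop :=
  let S := Sinf a j (r j) in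
  (forall k, k != j -> a' k = a k) /\
  Sdominates (rk j) S (a' j) (a j) /\
  differs_only_on i (a' j) (a j) /\
  (forall b, differs_only_on i b (a j) -> ~ Sdominates (rk j) S b (a' j)).

Definition truthful p n (rk : 'I_n -> ranking p) (dflt : alt p) : profile p n :=
  fun j => top (rk j) dflt.

Definition infinite_ldi p n (rk : 'I_n -> ranking p) (r : 'I_n -> 'I_p -> nat)
  (a0 : profile p n) : Prop :=
  exists A : nat -> profile p n, A 0 = a0 /\
    forall t, exists (j : 'I_n) (i : 'I_p), ldi_step rk r (A t) j i (A t.+1).

Definition a2 (x y : bool) : alt 2 := [ffun i : 'I_2 => if val i == 0 then x else y].

Definition rankA : ranking 2 := [:: a2 false true; a2 true true; a2 true false; a2 false false].
Definition rankB : ranking 2 := [:: a2 false false; a2 false true; a2 true true; a2 true false].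
Definition rankC : ranking 2 := [:: a2 true false; a2 true true; a2 false false; a2 false true].
Definition rankD : ranking 2 := [:: a2 true true; a2 true false; a2 false true; a2 false false].

Definition inst_rank (j : 'I_13) : ranking 2 :=
  if val j < 3 then rankA else if val j < 8 then rankB
  else if val j < 12 then rankC else rankD.

Definition inst_r (j : 'I_13) (i : 'I_2) : nat := if val i == 0 then 1 else 2.

(* Main.v *)
Require Import Defs.
From mathcomp Require Import all_boot zify.
From Stdlib Require Import FunctionalExtensionality.
Set Implicit Arguments. Unset Strict Implicit. Unset Printing Implicit Defensive.

Definition pa (q : bool * bool) : alt 2 := a2 q.1 q.2.

Lemma a2E x y (i : 'I_2) : a2 x y i = if val i == 0 then x else y.
Proof. by rewrite /a2 ffunE. Qed.

Definition o0 : 'I_2 := ord0.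
Definition o1 : 'I_2 := Ordinal (isT : 1 < 2).

Lemma ord2P (i : 'I_2) : i = o0 \/ i = o1.
Proof.
case: i => [[|[|n]] H]; [left; exact: val_inj | right; exact: val_inj | by []].
Qed.

Lemma pa0 q : pa q o0 = q.1. Proof. by rewrite /pa a2E. Qed.
Lemma pa1 q : pa q o1 = q.2. Proof. by rewrite /pa a2E. Qed.
Lemma pa01 q : (pa q o0, pa q o1) = q. Proof. by rewrite pa0 pa1; case: q. Qed.

Lemma alt_pa (x : alt 2) : x = pa (x o0, x o1).
Proof. apply/ffunP => i; rewrite /pa a2E /=; by case: (ord2P i) => ->. Qed.

Lemma pa_inj : injective pa.
Proof.
move=> [x y] [x' y'] /ffunP H.
have := H o0; have := H o1; rewrite !pa0 !pa1 /= => -> ->. by [].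
Qed.

Lemma index_pa (x : alt 2) L : index x (map pa L) = index (x o0, x o1) L.
Proof. by rewrite {1}(alt_pa x) (index_map pa_inj). Qed.

Definition LA := [:: (false,true); (true,true); (true,false); (false,false)].
Definition LB := [:: (false,false); (false,true); (true,true); (true,false)].
Definition LC := [:: (true,false); (true,true); (false,false); (false,true)].
Definition LD := [:: (true,true); (true,false); (false,true); (false,false)].
Definition Lrank (n : nat) :=
  if n < 3 then LA else if n < 8 then LB else if n < 12 then LC else LD.

Lemma inst_rankE j : inst_rank j = map pa (Lrank j).
Proof. rewrite /inst_rank /Lrank; by do 3?case: ifP. Qed.

Lemma is_ranking_inst j : is_ranking (inst_rank j).
Proof.
rewrite inst_rankE; split.
  rewrite (map_inj_uniq pa_inj). by rewrite /Lrank; do 3?case: ifP.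
move=> x; rewrite (alt_pa x) (mem_map pa_inj).
by rewrite /Lrank; case: (x o0); case: (x o1); do 3?case: ifP.
Qed.

Definition mout (x0f x0t x1f x1t : nat) (q : bool * bool) : bool * bool :=
  (x0f + (q.1 == false) < x0t + (q.1 == true),
   x1f + (q.2 == false) < x1t + (q.2 == true)).

Lemma out_pa (v : score 2) (b : alt 2) :
  ((outcome (addv v b)) o0, (outcome (addv v b)) o1)
  = mout (v o0 false) (v o0 true) (v o1 false) (v o1 true) (b o0, b o1).
Proof. by rewrite /outcome !ffunE /addv. Qed.

Definition prof_of (m : nat -> bool * bool) : profile 2 13 := fun k => pa (m (val k)).

Definition mcnt (m : nat -> bool * bool) (j i : nat) (c : bool) :=
  count (fun k => (k != j) && ((if i == 0 then (m k).1 else (m k).2) == c)) (iota 0 13).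

Lemma s_minusE m (j : 'I_13) (i : 'I_2) c :
  s_minus (prof_of m) j i c = mcnt m j i c.
Proof.
rewrite /s_minus /mcnt cardE /enum_mem size_filter -val_enum_ord count_map enumT.
apply: eq_count => k /=; rewrite inE /prof_of /pa a2E.
by case: (val i == 0).
Qed.

Definition rng (s rr : nat) := iota (s - rr) (s + rr + 1 - (s - rr)).

Lemma mem_rng v s rr : (v \in rng s rr) = (v <= s + rr) && (s <= v + rr).
Proof. rewrite /rng mem_iota; apply/idP/idP; lia. Qed.

Definition mbeats (L : seq (bool * bool)) (m : nat -> bool * bool) (j : nat)
  (b b' : bool * bool) : bool :=
  has (fun x0f => has (fun x0t => has (fun x1f => has (fun x1t =>
    index (mout x0f x0t x1f x1t b) L < index (mout x0f x0t x1f x1t b') L)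
    (rng (mcnt m j 1 true) 2)) (rng (mcnt m j 1 false) 2))
    (rng (mcnt m j 0 true) 1)) (rng (mcnt m j 0 false) 1).

Lemma prefersE (j : 'I_13) x y :
  prefers (inst_rank j) x y = (index (x o0, x o1) (Lrank j) < index (y o0, y o1) (Lrank j)).
Proof. by rewrite /prefers inst_rankE !index_pa. Qed.

Lemma mbeatsP m (j : 'I_13) b b' :
  Sbeats (inst_rank j) (Sinf (prof_of m) j (inst_r j)) b b' <->
  mbeats (Lrank j) m j (b o0, b o1) (b' o0, b' o1).
Proof.
split.
  move=> [v [Sv]]; rewrite prefersE !out_pa => H.
  have R : forall (i : 'I_2) c, v i c \in rng (mcnt m j i c) (inst_r j i).
    by move=> i c; rewrite mem_rng -s_minusE; case: (Sv i c) => -> ->.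
  apply/hasP; exists (v o0 false); first exact: (R o0 false).
  apply/hasP; exists (v o0 true); first exact: (R o0 true).
  apply/hasP; exists (v o1 false); first exact: (R o1 false).
  apply/hasP; exists (v o1 true); first exact: (R o1 true).
  exact: H.
case/hasP => x0f H0f /hasP [x0t H0t] /hasP [x1f H1f] /hasP [x1t H1t] H.
exists (fun (i : 'I_2) (c : bool) => if val i == 0 then (if c then x0t else x0f)
                               else (if c then x1t else x1f)).
split.
  move=> i c; rewrite s_minusE.
  by case: (ord2P i) => ->; case: c => /=;
    [move: H0t | move: H0f | move: H1t | move: H1f]; rewrite mem_rng => /andP [-> ->].
by rewrite prefersE !out_pa.
Qed.

Definition sameother (i : nat) (b c : bool * bool) : bool :=
  if i == 0 then b.2 == c.2 else b.1 == c.1.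

Definition mstep (m m' : nat -> bool * bool) (j i : nat) : bool :=
  let L := Lrank j in
  [&& all (fun k => (k == j) || (m' k == m k)) (iota 0 13),
      sameother i (m' j) (m j),
      mbeats L m j (m' j) (m j), ~~ mbeats L m j (m j) (m' j) &
      all (fun b => sameother i b (m j) ==>
                    ~~ (mbeats L m j b (m' j) && ~~ mbeats L m j (m' j) b))
          [:: (false,false); (false,true); (true,false); (true,true)]].

Lemma mstepP m m' (j : 'I_13) (i : 'I_2) :
  mstep m m' j i -> ldi_step inst_rank inst_r (prof_of m) j i (prof_of m').
Proof.
case/and5P => Hall Hdiff Hb Hnb Hlast.
split.
  move=> k Hk; rewrite /prof_of.
  have := allP Hall (val k); rewrite mem_iota /= ltn_ord => /(_ isT).
  have Hk' : (val k == val j) = false by exact: negbTE.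
  by rewrite Hk' /= => /eqP ->.
split.
  split.
    by apply/mbeatsP; rewrite /prof_of !pa01.
  by move/mbeatsP; rewrite /prof_of !pa01; apply/negP.
split.
  move=> k Hk; rewrite /prof_of.
  move: Hdiff; rewrite /sameother.
  case: (ord2P i) Hk => -> Hk; case: (ord2P k) Hk => -> //= _;
    by rewrite ?pa0 ?pa1 => /eqP.
move=> b Hd [Hdom Hndom].
have Hin : (b o0, b o1) \in [:: (false,false); (false,true); (true,false); (true,true)].
  by case: (b o0); case: (b o1).
have := allP Hlast _ Hin.
have -> : sameother i (b o0, b o1) (m j).
  rewrite /sameother; case: (ord2P i) Hd => -> Hd /=.
    by rewrite (Hd o1) // /prof_of pa1.
  by rewrite (Hd o0) // /prof_of pa0.
move/mbeatsP: Hdom; move/mbeatsP: Hndom; rewrite /prof_of !pa01 /=.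
by move=> /negP -> ->.
Qed.
Definition cyc : seq (seq (bool*bool)) := [::
[::(false,true);(false,true);(false,true);(false,false);(false,false);(false,false);(false,false);(false,false);(true,false);(true,false);(true,false);(true,false);(true,true)];
[::(true,true);(false,true);(false,true);(false,false);(false,false);(false,false);(false,false);(false,false);(true,false);(true,false);(true,false);(true,false);(true,true)];
[::(true,true);(true,true);(false,true);(false,false);(false,false);(false,false);(false,false);(false,false);(true,false);(true,false);(true,false);(true,false);(true,true)];
[::(true,true);(true,true);(true,true);(false,false);(false,false);(false,false);(false,false);(false,false);(true,false);(true,false);(true,false);(true,false);(true,true)];
[::(true,true);(true,true);(true,true);(false,true);(false,false);(false,false);(false,false);(false,false);(true,false);(true,false);(true,false);(true,false);(true,true)];
[::(true,true);(true,true);(true,true);(false,true);(false,true);(false,false);(false,false);(false,false);(true,false);(true,false);(true,false);(true,false);(true,true)];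
[::(true,true);(true,true);(true,true);(false,true);(false,true);(false,true);(false,false);(false,false);(true,false);(true,false);(true,false);(true,false);(true,true)];
[::(true,true);(true,true);(true,true);(false,true);(false,true);(false,true);(false,true);(false,false);(true,false);(true,false);(true,false);(true,false);(true,true)];
[::(true,true);(true,true);(true,true);(false,true);(false,true);(false,true);(false,true);(false,true);(true,false);(true,false);(true,false);(true,false);(true,true)];
[::(false,true);(true,true);(true,true);(false,true);(false,true);(false,true);(false,true);(false,true);(true,false);(true,false);(true,false);(true,false);(true,true)];
[::(false,true);(false,true);(true,true);(false,true);(false,true);(false,true);(false,true);(false,true);(true,false);(true,false);(true,false);(true,false);(true,true)];
[::(false,true);(false,true);(false,true);(false,true);(false,true);(false,true);(false,true);(false,true);(true,false);(true,false);(true,false);(true,false);(true,true)];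
[::(false,true);(false,true);(false,true);(false,false);(false,true);(false,true);(false,true);(false,true);(true,false);(true,false);(true,false);(true,false);(true,true)];
[::(false,true);(false,true);(false,true);(false,false);(false,false);(false,true);(false,true);(false,true);(true,false);(true,false);(true,false);(true,false);(true,true)];
[::(false,true);(false,true);(false,true);(false,false);(false,false);(false,false);(false,true);(false,true);(true,false);(true,false);(true,false);(true,false);(true,true)];
[::(false,true);(false,true);(false,true);(false,false);(false,false);(false,false);(false,false);(false,true);(true,false);(true,false);(true,false);(true,false);(true,true)]].
Definition js := [::0;1;2;3;4;5;6;7;0;1;2;3;4;5;6;7].
Definition is_ := [::0;0;0;1;1;1;1;1;0;0;0;1;1;1;1;1].

Definition mrow (r : nat) (k : nat) : bool * bool := nth (false,false) (nth [::] cyc r) k.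

Lemma cycle_ok : all (fun r => [&& nth 0 js r < 13, nth 0 is_ r < 2 &
   mstep (mrow r) (mrow (r.+1 %% 16)) (nth 0 js r) (nth 0 is_ r)]) (iota 0 16).
Proof. vm_compute. reflexivity. Qed.

Lemma start_ok : all (fun k => mrow 0 k == head (false,false) (Lrank k)) (iota 0 13).
Proof. vm_compute. reflexivity. Qed.

Theorem proposition2 :
  (forall j, is_ranking (inst_rank j)) /\
  infinite_ldi inst_rank inst_r (truthful inst_rank (a2 false false)).
Proof.
split; first exact: is_ranking_inst.
exists (fun t => prof_of (mrow (t %% 16))); split.
  apply: functional_extensionality => j.
  rewrite /truthful /top inst_rankE /prof_of mod0n.
  have -> : head (a2 false false) (map pa (Lrank j)) = pa (head (false,false) (Lrank j)).
    by rewrite /Lrank; do 3?case: ifP.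
  congr pa; apply/eqP.
  have := allP start_ok (val j); rewrite mem_iota /= ltn_ord; exact.
move=> t.
have Ht : t %% 16 < 16 by rewrite ltn_mod.
have := allP cycle_ok (t %% 16); rewrite mem_iota /= Ht => /(_ isT) /and3P [Hj Hi Hs].
exists (inord (nth 0 js (t %% 16))), (inord (nth 0 is_ (t %% 16))).
have E : t.+1 %% 16 = (t %% 16).+1 %% 16 by rewrite -[in RHS]addn1 modnDml addn1.
rewrite E; apply: mstepP; rewrite !inordK //.
Qed.
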